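(* A semiring $(S,+,\cdot)$ is a rectangular skew-ring if and only if it is isomorphic to a direct product of a rectangular band semiring and a skew-ring.
   Context: A semiring $(S,+,\cdot)$ is an algebra with two associative binary operations such that $a(b+c)=ab+ac$ and $(b+c)a=ba+ca$ for all $a,b,c\in S$. An element $a$ is completely regular if there is $x\in S$ with $a=a+x+a$, $a+x=x+a$ and $a(a+x)=a+x$; $S$ is completely regular if all its elements are. $\mathscr{J}^+$ denotes Green's $\mathscr{J}$-relation of the semigroup $(S,+)$. A completely simple semiring is a completely regular semiring with $\mathscr{J}^+=S\times S$. $E^+(S)$ is the set of additive idempotents of $S$. A rectangular skew-ring is a completely simple semiring $S$ such that $E^+(S)$ is a subsemigroup of $(S,+)$. A skew-ring is a semiring whose additive reduct is a (not necessarily commutative) group. A rectangular band semiring is a semiring in which $(S,\cdot)$ is a band and $(S,+)$ is a rectangular band (i.e. $a=a+x+a$ for all $a,x\in S$). Direct products of semirings carry componentwise operations. *)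

(* Defs.v *)
From mathcomp Require Import ssreflect ssrfun ssrbool.
Set Implicit Arguments.
Unset Strict Implicit.

Definition is_semiring (S : Type) (add mul : S -> S -> S) : Prop :=
  (forall a b c, add a (add b c) = add (add a b) c) /\
  (forall a b c, mul a (mul b c) = mul (mul a b) c) /\
  (forall a b c, mul a (add b c) = add (mul a b) (mul a c)) /\
  (forall a b c, mul (add b c) a = add (mul b a) (mul c a)).

Definition completely_regular_elt (S : Type) (add mul : S -> S -> S) (a : S) : Prop :=
  exists x, a = add (add a x) a /\ add a x = add x a /\ mul a (add a x) = add a x.

Definition completely_regular (S : Type) (add mul : S -> S -> S) : Prop :=
  is_semiring add mul /\ forall a, completely_regular_elt add mul a.

(* Adjoining an identity: [None] plays the role of the adjoined identity of S^1. *)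
Definition laddo (S : Type) (add : S -> S -> S) (u : option S) (s : S) : S :=
  match u with None => s | Some x => add x s end.
Definition raddo (S : Type) (add : S -> S -> S) (s : S) (v : option S) : S :=
  match v with None => s | Some y => add s y end.

Definition in_ideal_plus (S : Type) (add : S -> S -> S) (a b : S) : Prop :=
  exists u v : option S, a = laddo add u (raddo add b v).

Definition Jplus (S : Type) (add : S -> S -> S) (a b : S) : Prop :=
  in_ideal_plus add a b /\ in_ideal_plus add b a.

Definition completely_simple (S : Type) (add mul : S -> S -> S) : Prop :=
  completely_regular add mul /\ forall a b, Jplus add a b.

Definition Eplus_subsemigroup (S : Type) (add : S -> S -> S) : Prop :=
  forall e f, add e e = e -> add f f = f -> add (add e f) (add e f) = add e f.

Definition rectangular_skew_ring (S : Type) (add mul : S -> S -> S) : Prop :=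
  completely_simple add mul /\ Eplus_subsemigroup add.

Definition rectangular_band_semiring (S : Type) (add mul : S -> S -> S) : Prop :=
  is_semiring add mul /\ (forall a, mul a a = a) /\
  (forall a x, a = add (add a x) a).

Definition skew_ring (S : Type) (add mul : S -> S -> S) : Prop :=
  is_semiring add mul /\
  exists (z : S) (neg : S -> S),
    (forall a, add z a = a /\ add a z = a) /\
    (forall a, add (neg a) a = z /\ add a (neg a) = z).

Definition prod_op (A B : Type) (opA : A -> A -> A) (opB : B -> B -> B)
  (p q : A * B) : A * B := (opA p.1 q.1, opB p.2 q.2).

Definition semiring_iso (S T : Type) (addS mulS : S -> S -> S)
  (addT mulT : T -> T -> T) (f : S -> T) : Prop :=
  bijective f /\
  (forall a b, f (addS a b) = addT (f a) (f b)) /\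
  (forall a b, f (mulS a b) = mulT (f a) (f b)).

(* Main.v *)
Require Import Defs.
From mathcomp Require Import ssreflect ssrfun ssrbool.
From Stdlib Require Import Classical IndefiniteDescription ProofIrrelevance.

Lemma sigE (A : Type) (P : A -> Prop) (p q : {x | P x}) :
  proj1_sig p = proj1_sig q -> p = q.
Proof.
case: p => x px; case: q => y py /= E; subst y; f_equal; apply: proof_irrelevance.
Qed.

Lemma dir_right (S : Type) (add mul : S -> S -> S) :
  is_semiring add mul -> rectangular_skew_ring add mul ->
   exists (B R : Type) (addB mulB : B -> B -> B) (addR mulR : R -> R -> R)
          (f : S -> B * R),
     rectangular_band_semiring addB mulB /\ skew_ring addR mulR /\
     semiring_iso add mul (prod_op addB addR) (prod_op mulB mulR) f.
Proof.
move=> HS [[[_ HCR] HJ] HE].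
have HS' := HS; case: HS' => assoc [massoc [distl distr]].
have Jst : forall a b, exists s t, a = add (add s b) t.
  move=> a b; have [x [h1 [h2 _]]] := HCR a.
  have ha: add (add a x) a = a by rewrite -h1.
  have ah: add a (add a x) = a by rewrite h2 assoc -h1.
  have [[u [v Huv]] _] := HJ a b.
  case: u Huv => [u|]; case: v => [v|] /= Huv.
  - exists (add (add a x) u), (add v (add a x)).
    apply: (@eq_trans _ _ (add (add (add a x) (add u (add b v))) (add a x))).
      by rewrite -Huv ha ah.
    by rewrite !assoc.
  - exists (add (add a x) u), (add a x).
    apply: (@eq_trans _ _ (add (add (add a x) (add u b)) (add a x))).
      by rewrite -Huv ha ah.
    by rewrite !assoc.
  - exists (add a x), (add v (add a x)).
    apply: (@eq_trans _ _ (add (add (add a x) (add b v)) (add a x))).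
      by rewrite -Huv ha ah.
    by rewrite !assoc.
  - exists (add a x), (add a x).
    apply: (@eq_trans _ _ (add (add (add a x) b) (add a x))).
      by rewrite -Huv ha ah.
    by [].
have Prim : forall e g w t, add e g = g -> add g e = g -> e = add w t ->
    add w g = w -> e = g.
  move=> e g w t Heg Hge ew Hwg.
  have [x [h1 [h2 _]]] := HCR w.
  have hw: add (add w x) w = w by rewrite -h1.
  have he: add (add w x) (add w t) = add w t by rewrite assoc hw.
  rewrite -ew in he.
  have hg: add (add w x) g = add w x by rewrite h2 -assoc Hwg.
  have gh: g = add w x by rewrite -Heg -{1}he -assoc Heg hg.
  by rewrite -he -gh Hge.
have rect : forall e f, add e e = e -> add f f = f -> add (add e f) e = e.
  move=> e f He Hf.
  have Hg := HE _ _ (HE _ _ He Hf) He.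
  have eg: add e (add (add e f) e) = add (add e f) e by rewrite !assoc He.
  have ge: add (add (add e f) e) e = add (add e f) e by rewrite -assoc He.
  have [s [t He']] := Jst e (add (add e f) e).
  move: (add (add e f) e) Hg eg ge He' => g Hg eg ge He'.
  symmetry; apply: (Prim _ _ (add (add e s) g) t eg ge).
    by rewrite -!assoc (assoc s) -He' He.
  by rewrite -assoc Hg.
have rect3 : forall x y z, add x x = x -> add y y = y -> add z z = z ->
    add (add x y) z = add x z.
  move=> x y z Hx Hy Hz.
  by rewrite -{1}(rect z x Hz Hx) !assoc -(assoc x y z)
     (rect x _ Hx (HE _ _ Hy Hz)).
have H0 : forall a, exists h, add h h = h /\ add h a = a /\ add a h = a.
  move=> a; have [x [h1 [h2 _]]] := HCR a; exists (add a x); split.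
    by rewrite assoc -h1.
  split; first by rewrite -h1.
  by rewrite h2 assoc -h1.
have K : forall a e b, add e e = e -> add (add a e) b = add a b.
  move=> a e b He.
  have [ha [Ha [Hha Hah]]] := H0 a; have [hb [Hb [Hhb Hbh]]] := H0 b.
  rewrite -[in LHS]Hah -[in LHS]Hhb !assoc.
  rewrite -(assoc (add a ha) e hb) -(assoc a ha) (assoc ha e hb)
    (rect3 ha e hb Ha He Hb).
  by rewrite assoc Hah -assoc Hhb.
have U : forall c e x, add e e = e -> c = add (add e c) e ->
    c = add (add c x) c -> add c x = add x c -> add c x = e.
  move=> c e x He Hc h1 h2.
  have eh: add e (add c x) = add c x by rewrite {1}Hc !assoc He -Hc.
  have he': add (add c x) e = add c x.
    by rewrite h2 {1}Hc -!assoc He (assoc e) -Hc.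
  have Hh: add (add c x) (add c x) = add c x by rewrite assoc -h1.
  by rewrite -[RHS](rect _ _ He Hh) eh he'.
have idemMl : forall e s, add e e = e -> add (mul e s) (mul e s) = mul e s.
  by move=> e s He; rewrite -distr He.
have idemMr : forall e s, add e e = e -> add (mul s e) (mul s e) = mul s e.
  by move=> e s He; rewrite -distl He.
pose xa := fun a => proj1_sig (constructive_indefinite_description _ (HCR a)).
have Hxa : forall a, a = add (add a (xa a)) a /\ add a (xa a) = add (xa a) a /\
    mul a (add a (xa a)) = add a (xa a).
  by move=> a; exact: (proj2_sig (constructive_indefinite_description _ (HCR a))).
clearbody xa.
pose a0 := fun a => add a (xa a).
have a0idem : forall a, add (a0 a) (a0 a) = a0 a.
  by move=> a; rewrite /a0 assoc -(proj1 (Hxa a)).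
have a0l : forall a, add (a0 a) a = a.
  by move=> a; rewrite /a0 -(proj1 (Hxa a)).
have a0r : forall a, add a (a0 a) = a.
  by move=> a; rewrite /a0 (proj1 (proj2 (Hxa a))) assoc -(proj1 (Hxa a)).
have a0m : forall a, mul a (a0 a) = a0 a.
  by move=> a; rewrite /a0 (proj2 (proj2 (Hxa a))).
have a0def : forall a, a0 a = add a (xa a) by [].
clearbody a0.
have a0U : forall c e, add e e = e -> c = add (add e c) e -> a0 c = e.
  move=> c e He Hc; have [h1 [h2 _]] := Hxa c.
  rewrite a0def; exact: (U c e (xa c) He Hc h1 h2).
have a0E : forall e, add e e = e -> a0 e = e.
  by move=> e He; apply: a0U => //; rewrite !He.
have mulidem : forall e, add e e = e -> mul e e = e.
  by move=> e He; move: (a0m e); rewrite (a0E e He).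
have a0add : forall a b, a0 (add a b) = add (a0 a) (a0 b).
  move=> a b; apply: a0U; first exact: HE.
  rewrite !assoc (K _ (a0 b) _ (a0idem b)) (K _ (a0 a) _ (a0idem a)).
  by rewrite a0l -assoc a0r.
have a0mul : forall a b, a0 (mul a b) = mul (a0 a) (a0 b).
  move=> a b; apply: a0U; first exact: idemMl.
  have Hp := idemMl (a0 a) (a0 b) (a0idem a).
  have hq : mul (a0 a) b = mul (a0 a) (a0 b).
    have Hq := idemMl (a0 a) b (a0idem a).
    have hq1: add (mul (a0 a) (a0 b)) (mul (a0 a) b) = mul (a0 a) b
      by rewrite -distl a0l.
    have hq2: add (mul (a0 a) b) (mul (a0 a) (a0 b)) = mul (a0 a) b
      by rewrite -distl a0r.
    by rewrite -[RHS](rect _ _ Hp Hq) hq1 hq2.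
  have hr : mul a (a0 b) = mul (a0 a) (a0 b).
    have Hq := idemMr (a0 b) a (a0idem b).
    have hq1: add (mul (a0 a) (a0 b)) (mul a (a0 b)) = mul a (a0 b)
      by rewrite -distr a0l.
    have hq2: add (mul a (a0 b)) (mul (a0 a) (a0 b)) = mul a (a0 b)
      by rewrite -distr a0r.
    by rewrite -[RHS](rect _ _ Hp Hq) hq1 hq2.
  apply: (@eq_trans _ _ (mul (add (a0 a) a) (add b (a0 b)))).
    by rewrite a0l a0r.
  by rewrite distr !distl hq hr Hp !assoc.
case: (classic (inhabited S)) => [[e0']|nS]; last first.
  exists S, unit, add, mul, (fun _ _ => tt), (fun _ _ => tt), (fun a => (a, tt)).
  split; first by split => //; split => a; exfalso; apply: nS; constructor.
  split.
    split; first by repeat split.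
    by exists tt, (fun _ => tt); split => -[].
  split; last by split.
  by exists fst => // -[a []].
pose e0 := a0 e0'.
have He0 : add e0 e0 = e0 := a0idem e0'.
clearbody e0.
have Rin : forall c, add (add e0 (add (add e0 c) e0)) e0 = add (add e0 c) e0.
  by move=> c; rewrite !assoc He0 -assoc He0.
have Kl : forall a s b, add (add a (mul e0 s)) b = add a b.
  by move=> a s b; apply: K; apply: idemMl.
have Kr : forall a s b, add (add a (mul s e0)) b = add a b.
  by move=> a s b; apply: K; apply: idemMr.
have M : forall a b, add (add e0 (mul (add (add e0 a) e0) (add (add e0 b) e0))) e0
     = add (add e0 (mul a b)) e0.
  by move=> a b; rewrite !distr !distl !assoc !Kl !Kr.
have ML : forall c k, add (add e0 k) e0 = k ->
    add (add e0 (mul (add (add e0 c) e0) k)) e0 = add (add e0 (mul c k)) e0.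
  by move=> c k Hk; rewrite -{1}Hk M.
have MR : forall g c, add (add e0 g) e0 = g ->
    add (add e0 (mul g (add (add e0 c) e0))) e0 = add (add e0 (mul g c)) e0.
  by move=> g c Hg; rewrite -{1}Hg M.
have Radd : forall g h, add (add e0 g) e0 = g -> add (add e0 h) e0 = h ->
    add (add e0 (add g h)) e0 = add g h.
  move=> g h Hg Hh; rewrite -{2}Hg -{2}Hh !assoc.
  by rewrite !(K _ e0 _ He0).
exists {e : S | add e e = e}, {g : S | add (add e0 g) e0 = g}.
exists (fun p q => exist _ (add (proj1_sig p) (proj1_sig q))
                   (HE _ _ (proj2_sig p) (proj2_sig q))).
exists (fun p q => exist _ (mul (proj1_sig p) (proj1_sig q))
                   (idemMl _ (proj1_sig q) (proj2_sig p))).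
exists (fun p q => exist _ (add (proj1_sig p) (proj1_sig q))
                   (Radd _ _ (proj2_sig p) (proj2_sig q))).
exists (fun p q => exist (fun g => add (add e0 g) e0 = g)
          (add (add e0 (mul (proj1_sig p) (proj1_sig q))) e0) (Rin _)).
exists (fun a => (exist (fun e => add e e = e) (a0 a) (a0idem a),
                  exist (fun g => add (add e0 g) e0 = g) (add (add e0 a) e0) (Rin a))).
split.
  split.
    split; first by move=> *; apply: sigE; apply: assoc.
    split; first by move=> *; apply: sigE; apply: massoc.
    split; first by move=> *; apply: sigE; apply: distl.
    by move=> *; apply: sigE; apply: distr.
  split; first by move=> [e He]; apply: sigE => /=; apply: mulidem.
  by move=> [e He] [x Hx]; apply: sigE => /=; rewrite rect.
split.
  split.
    split; first by move=> *; apply: sigE; apply: assoc.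
    split.
      move=> [g Hg] [h Hh] [k Hk]; apply: sigE => /=.
      by rewrite (ML _ _ Hk) (MR _ _ Hg) massoc.
    split.
      move=> [g Hg] [h Hh] [k Hk]; apply: sigE => /=.
      by rewrite distl !assoc !(K _ e0 _ He0).
    move=> [g Hg] [h Hh] [k Hk]; apply: sigE => /=.
    by rewrite distr !assoc !(K _ e0 _ He0).
  have Pe0 : add (add e0 e0) e0 = e0 by rewrite !He0.
  exists (exist (fun g => add (add e0 g) e0 = g) e0 Pe0).
  exists (fun p => exist (fun g => add (add e0 g) e0 = g)
            (add (add e0 (xa (proj1_sig p))) e0) (Rin _)).
  split.
    move=> [g Hg]; split; apply: sigE => /=.
      by rewrite -Hg !assoc He0.
    by rewrite -Hg -assoc He0.
  move=> [g Hg]; move: (Hxa g); rewrite /=; move: (xa g) => x [h1 [h2 _]].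
  have Hgx : add (add g x) (add g x) = add g x by rewrite assoc -h1.
  split; apply: sigE => /=.
    rewrite (K _ e0 _ He0) -{1}Hg !assoc (K _ e0 _ He0).
    by rewrite -(assoc e0 x g) -h2 rect.
  rewrite !assoc (K _ e0 _ He0) -{1}Hg (K _ e0 _ He0).
  by rewrite -(assoc e0 g x) rect.
split.
  exists (fun p => add (add (proj1_sig p.1) (proj1_sig p.2)) (proj1_sig p.1)).
    by move=> a /=; rewrite !assoc !(K _ e0 _ He0) a0l a0r.
  move=> [[e He] [r Hr]] /=; congr pair; apply: sigE => /=.
    apply: a0U => //; symmetry; rewrite !assoc He -assoc He //.
  by rewrite !assoc !(K _ e _ He) Hr.
split.
  move=> a b; rewrite /prod_op /=; congr pair; apply: sigE => /=.
    exact: a0add.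
  by rewrite !assoc !(K _ e0 _ He0).
move=> a b; rewrite /prod_op /=; congr pair; apply: sigE => /=.
  exact: a0mul.
by rewrite M.
Qed.

Lemma dir_left (S : Type) (add mul : S -> S -> S) :
  is_semiring add mul ->
  (exists (B R : Type) (addB mulB : B -> B -> B) (addR mulR : R -> R -> R)
          (f : S -> B * R),
     rectangular_band_semiring addB mulB /\ skew_ring addR mulR /\
     semiring_iso add mul (prod_op addB addR) (prod_op mulB mulR) f) ->
  rectangular_skew_ring add mul.
Proof.
move=> HS [B [R [addB [mulB [addR [mulR [f [HB [HR [[g fK gK] [fadd fmul]]]]]]]]]]].
case: HB => [[Bassoc _] [Bband Brect]].
case: HR => [[Rassoc [_ [Rdl _]]] [z [neg [Hz Hneg]]]].
have finj := can_inj fK.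
have Bid : forall b, addB b b = b.
  move=> b; rewrite {1}(Brect (addB b b) b) -(Brect b b) Bassoc -(Brect b b) //.
have Rz0 : forall r, mulR r z = z.
  move=> r; set w := mulR r z.
  have hw: w = addR w w by rewrite /w -Rdl (proj1 (Hz z)).
  by rewrite -(proj1 (Hneg w)) {3}hw Rassoc (proj1 (Hneg w)) (proj1 (Hz w)).
have Ridz : forall r, addR r r = r -> r = z.
  move=> r Hr.
  by rewrite -(proj1 (Hneg r)) -{3}Hr Rassoc (proj1 (Hneg r)) (proj1 (Hz r)).
split.
  split.
    split => // a.
    case Efa: (f a) => [b r].
    exists (g (b, neg r)).
    have Efx: f (g (b, neg r)) = (b, neg r) := gK _.
    split; [|split]; apply: finj; rewrite ?fadd ?fmul Efa ?fadd ?Efa Efx /prod_op /=.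
    - by rewrite -Brect (proj2 (Hneg r)) (proj1 (Hz r)).
    - by rewrite (proj1 (Hneg r)) (proj2 (Hneg r)).
    - by rewrite Bid Bband (proj2 (Hneg r)) Rz0.
  have Hid : forall a b, in_ideal_plus add a b.
    move=> a b.
    case Efa: (f a) => [b1 r1]; case Efb: (f b) => [b2 r2].
    exists (Some (g (b1, addR r1 (neg r2)))), (Some (g (b1, z))) => /=.
    apply: finj; rewrite !fadd Efa Efb !gK /prod_op /=.
    by rewrite Bassoc -Brect (proj2 (Hz r2)) -Rassoc (proj1 (Hneg r2)) (proj2 (Hz r1)).
  by move=> a b; split; apply: Hid.
move=> e e' He He'.
case Efe: (f e) => [b r]; case Efe': (f e') => [b' r'].
move/(f_equal f): He; rewrite fadd Efe /prod_op /= => -[_ Hr].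
move/(f_equal f): He'; rewrite fadd Efe' /prod_op /= => -[_ Hr'].
apply: finj; rewrite !fadd Efe Efe' /prod_op /=.
by rewrite (Ridz r Hr) (Ridz r' Hr') !(proj1 (Hz z)) Bid.
Qed.

Theorem theorem3p3 (S : Type) (add mul : S -> S -> S) :
  is_semiring add mul ->
  (rectangular_skew_ring add mul <->
   exists (B R : Type) (addB mulB : B -> B -> B) (addR mulR : R -> R -> R)
          (f : S -> B * R),
     rectangular_band_semiring addB mulB /\ skew_ring addR mulR /\
     semiring_iso add mul (prod_op addB addR) (prod_op mulB mulR) f).
Proof.
move=> HS; split; [exact: dir_right | exact: dir_left].
Qed.
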